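(* Let $K$ be a finite set (of origin–destination pairs) and, for each $k \in K$, let $T_k$ be a finite nonempty set (of departure time options) and $Q_k > 0$ a given demand. A flow vector is $\mathbf{Q} = \{q_k(t) : k \in K, t \in T_k\}$, and for each flow vector let $C_k(t) = C_k(t;\mathbf{Q}) \in \mathbb{R}$ be given average travel costs, an arbitrary function of $\mathbf{Q}$. Consider the nonlinear mathematical program (NMP) in the variables $\mathbf{Q}$ and $\boldsymbol{\rho} = \{\rho_k : k \in K\}$: $$\min_{\mathbf{Q},\boldsymbol{\rho}} \ \zeta(\mathbf{Q},\boldsymbol{\rho}) = \sum_{k \in K}\sum_{t \in T_k} \big(C_k(t;\mathbf{Q}) - \rho_k\big)\, q_k(t)$$ subject to $C_k(t;\mathbf{Q}) - \rho_k \ge 0$ for all $k \in K, t \in T_k$; $q_k(t) \ge 0$ for all $k\in K, t \in T_k$; $Q_k - \sum_{t \in T_k} q_k(t) = 0$ for all $k \in K$; and $\rho_k \ge 0$ for all $k \in K$. If $(\mathbf{Q}^*, \boldsymbol{\rho}^* )$ is an optimal solution of this NMP, then for every $k \in K$, $$\rho_k^* = \min_{t \in T_k} C_k(t;\mathbf{Q}^* ).$$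
   Context: This is a departure-time user-equilibrium model for public transport: $K$ is the set of origin–destination (OD) pairs, $T_k$ the set of train departure times available at the origin of OD pair $k$, $Q_k$ the total demand of OD pair $k$, $q_k(t)$ the number of users of OD pair $k$ choosing departure time $t$, and $C_k(t;\mathbf{Q})$ the average generalized travel cost of option $(k,t)$ under flow distribution $\mathbf{Q}$ (in the paper computed by a network-loading simulation; here it may be any function of $\mathbf{Q}$). The variables $\rho_k$ are auxiliary per-OD cost levels. *)

(* Defs.v *)
From mathcomp Require Import all_boot all_order all_algebra.
Unset Printing Implicit Defensive.
Import Order.TTheory GRing.Theory Num.Theory.
Local Open Scope ring_scope.

Definition flow (R : Type) (K : finType) (T : K -> finType) := forall k : K, T k -> R.

(* Minimum of f over a finite type (the value 0 is only a dummy for the empty type,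
   which never occurs below since every T_k is assumed nonempty). *)
Definition minf (R : realFieldType) (X : finType) (f : X -> R) : R :=
  match [pick t : X] with
  | Some t0 => \big[Num.min/f t0]_(t : X) f t
  | None => 0
  end.

Section NMP.
Variables (R : realFieldType) (K : finType) (T : K -> finType).
Variable (Qd : K -> R).
Variable (C : flow R K T -> forall k : K, T k -> R).

Definition zeta (Q : flow R K T) (rho : K -> R) : R :=
  \sum_(k : K) \sum_(t : T k) (C Q k t - rho k) * Q k t.

Definition feasible (Q : flow R K T) (rho : K -> R) : Prop :=
  [/\ (forall k t, 0 <= C Q k t - rho k),
      (forall k t, 0 <= Q k t),
      (forall k, Qd k - \sum_(t : T k) Q k t = 0)
    & (forall k, 0 <= rho k)].

Definition optimal (Q : flow R K T) (rho : K -> R) : Prop :=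
  feasible Q rho /\
  (forall Q' rho', feasible Q' rho' -> zeta Q rho <= zeta Q' rho').
End NMP.

(* Main.v *)
Require Import Defs.
From mathcomp Require Import all_boot all_order all_algebra.
Import Order.TTheory GRing.Theory Num.Theory.
From mathcomp Require Import ring.
Local Open Scope ring_scope.

Lemma minf_facts (R : realFieldType) (X : finType) (f : X -> R) :
  (0 < #|X|)%N -> (forall t, @minf R X f <= f t) /\ (exists t, @minf R X f = f t).
Proof.
move=> hX; rewrite /minf; case: pickP => [t0 _|h]; last first.
  by case/card_gt0P: hX => x _; have := h x.
split.
  move=> t; rewrite (bigD1 t) //=; rewrite ge_min; by rewrite lexx.
apply: (big_ind (fun x => exists t, x = f t)); first by exists t0.
- move=> a b [ta ->] [tb ->]; rewrite minElt; case: ifP => _; by eauto.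
- by move=> t _; exists t.
Qed.

Theorem proposition2 (R : realFieldType) (K : finType) (T : K -> finType)
    (Qd : K -> R) (C : flow R K T -> forall k : K, T k -> R)
    (hT : forall k : K, (0 < #|T k|)%N)
    (hQd : forall k : K, 0 < Qd k)
    (Qs : flow R K T) (rhos : K -> R) :
  @optimal R K T Qd C Qs rhos ->
  forall k : K, rhos k = @minf R (T k) (C Qs k).
Proof.
move=> [[hC hQ hS hr] hopt] k.
have [hle [t0 ht0]] := @minf_facts R (T k) (C Qs k) (hT k).
set m := @minf R (T k) (C Qs k) in hle ht0 *.
have h1 : rhos k <= m by rewrite ht0 -subr_ge0.
apply/eqP; rewrite eq_le h1 /=; rewrite leNgt; apply/negP => hlt.
pose rho' := fun k' => if k' == k then m else rhos k'.
have hf : @feasible R K T Qd C Qs rho'.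
  split => //.
  - move=> k'; rewrite /rho'; case: eqP => [->|_] t; last exact: hC.
    by rewrite subr_ge0.
  - move=> k'; rewrite /rho'; case: eqP => _ //.
    exact: le_trans (hr k) h1.
have := hopt _ _ hf; apply/negP; rewrite -ltNge.
rewrite /zeta (bigD1 k) //= [X in _ < X](bigD1 k) //=.
have -> : \sum_(i | i != k) \sum_t (C Qs i t - rho' i) * Qs i t =
          \sum_(i | i != k) \sum_t (C Qs i t - rhos i) * Qs i t.
  by apply: eq_bigr => i /negbTE hi; rewrite /rho' hi.
rewrite ltrD2r /rho' eqxx.
have -> : \sum_t (C Qs k t - m) * Qs k t =
          \sum_t (C Qs k t - rhos k) * Qs k t - (m - rhos k) * \sum_t Qs k t.
  rewrite mulr_sumr -sumrB; apply: eq_bigr => t _; ring.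
have : Qd k = \sum_t Qs k t by apply/eqP; rewrite -subr_eq0 hS.
move=> <-; rewrite ltrBlDr ltrDl; apply: mulr_gt0 => //.
by rewrite subr_gt0.
Qed.
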